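(* Let $A$ and $B$ be input types of system $\mathcal F$ not containing the type constant $O$. Then $A\wedge B$, $A\vee B$ and $LA$ are input types.
   Context: $\lambda$-terms are those of the untyped $\lambda$-calculus; normal means without $\beta$-redex. Types of system $\mathcal F$: built from type variables and type constants (atomic, not quantifiable; $O$ is one) with $\rightarrow$, $\forall$; only proper types (in every $\forall XA$, $X$ occurs free in $A$). Typing: (ax) $\Gamma \vdash x_i : A_i$ for $x_i:A_i\in\Gamma$; ($\rightarrow_i$) from $\Gamma, x:B \vdash t : C$ infer $\Gamma \vdash \lambda x t : B \rightarrow C$; ($\rightarrow_e$) from $\Gamma \vdash u : B\rightarrow C$, $\Gamma \vdash v : B$ infer $\Gamma \vdash (u)v : C$; ($\forall_i$) from $\Gamma \vdash t : A$, $X$ not free in $\Gamma$, infer $\Gamma \vdash t : \forall X A$; ($\forall_e$) from $\Gamma \vdash t : \forall X A$ infer $\Gamma \vdash t : A[C/X]$. $\mathcal F_0$ is $\mathcal F$ without ($\forall_e$). An input type is a closed type $E$ such that for every normal $t$, $\vdash_{\mathcal F} t:E$ implies $\vdash_{\mathcal F_0} t:E$. With $X$ a type variable not free in $A,B$: $A\wedge B=\forall X\{(A\rightarrow(B\rightarrow X))\rightarrow X\}$, $A\vee B=\forall X\{(A\rightarrow X)\rightarrow((B\rightarrow X)\rightarrow X)\}$, $LA=\forall X\{X\rightarrow[(A\rightarrow(X\rightarrow X))\rightarrow X]\}$. *)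

(* Defs.v *)
From Stdlib Require Import Arith List.
Import ListNotations.

(** Types: type variables (de Bruijn), type constants (atomic, not
    quantifiable), arrow, forall (binds index 0). *)
Inductive ty : Type :=
  | TVar : nat -> ty
  | TConst : nat -> ty
  | TArr : ty -> ty -> ty
  | TAll : ty -> ty.

Definition O : ty := TConst 0.

Fixpoint lift (k c : nat) (A : ty) : ty :=
  match A with
  | TVar n => if n <? c then TVar n else TVar (n + k)
  | TConst a => TConst a
  | TArr A1 A2 => TArr (lift k c A1) (lift k c A2)
  | TAll A1 => TAll (lift k (S c) A1)
  end.

Fixpoint subst (j : nat) (C : ty) (A : ty) : ty :=
  match A with
  | TVar n => if n =? j then lift j 0 C
              else if n <? j then TVar n else TVar (pred n)
  | TConst a => TConst a
  | TArr A1 A2 => TArr (subst j C A1) (subst j C A2)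
  | TAll A1 => TAll (subst (S j) C A1)
  end.

(** A[C/X] where X is the variable bound by the outer forall *)
Definition inst (A C : ty) : ty := subst 0 C A.

Fixpoint occurs (n : nat) (A : ty) : bool :=
  match A with
  | TVar m => m =? n
  | TConst _ => false
  | TArr A1 A2 => occurs n A1 || occurs n A2
  | TAll A1 => occurs (S n) A1
  end.

Fixpoint proper (A : ty) : Prop :=
  match A with
  | TVar _ | TConst _ => True
  | TArr A1 A2 => proper A1 /\ proper A2
  | TAll A1 => proper A1 /\ occurs 0 A1 = true
  end.

Fixpoint closed_at (k : nat) (A : ty) : Prop :=
  match A with
  | TVar n => n < k
  | TConst _ => True
  | TArr A1 A2 => closed_at k A1 /\ closed_at k A2
  | TAll A1 => closed_at (S k) A1
  end.

Definition closed_ty (A : ty) : Prop := closed_at 0 A.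

Fixpoint contains_const (c : nat) (A : ty) : bool :=
  match A with
  | TVar _ => false
  | TConst a => a =? c
  | TArr A1 A2 => contains_const c A1 || contains_const c A2
  | TAll A1 => contains_const c A1
  end.

Definition contains_O (A : ty) : bool := contains_const 0 A.

Inductive term : Type :=
  | Var : nat -> term
  | Lam : term -> term
  | App : term -> term -> term.

Fixpoint normal (t : term) : Prop :=
  match t with
  | Var _ => True
  | Lam u => normal u
  | App (Lam _) _ => False
  | App u v => normal u /\ normal v
  end.

(** Typing of system F (elim = true) and F0 (elim = false: no forall-elim).
    Only proper types are used: the new types introduced by the rules
    (B in ->_i, C in forall_e, forall X A in forall_i) are required proper.
    forall_i: "X not free in Gamma" is rendered in de Bruijn style by
    shifting the context. *)
Inductive typing (elim : bool) : list ty -> term -> ty -> Prop :=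
  | T_ax : forall G n A, nth_error G n = Some A -> typing elim G (Var n) A
  | T_arr_i : forall G B C t,
      proper B -> typing elim (B :: G) t C -> typing elim G (Lam t) (TArr B C)
  | T_arr_e : forall G u v B C,
      typing elim G u (TArr B C) -> typing elim G v B -> typing elim G (App u v) C
  | T_all_i : forall G t A,
      occurs 0 A = true ->
      typing elim (map (lift 1 0) G) t A -> typing elim G t (TAll A)
  | T_all_e : forall G t A C,
      elim = true -> proper C ->
      typing elim G t (TAll A) -> typing elim G t (inst A C).

Definition typF (G : list ty) (t : term) (A : ty) : Prop := typing true G t A.
Definition typF0 (G : list ty) (t : term) (A : ty) : Prop := typing false G t A.

Definition input_type (E : ty) : Prop :=
  closed_ty E /\ proper E /\
  forall t : term, normal t -> typF [] t E -> typF0 [] t E.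

(** A /\ B = forall X ((A -> (B -> X)) -> X), X fresh (index 0, A,B shifted) *)
Definition tand (A B : ty) : ty :=
  TAll (TArr (TArr (lift 1 0 A) (TArr (lift 1 0 B) (TVar 0))) (TVar 0)).

(** A \/ B = forall X ((A -> X) -> ((B -> X) -> X)) *)
Definition tor (A B : ty) : ty :=
  TAll (TArr (TArr (lift 1 0 A) (TVar 0))
             (TArr (TArr (lift 1 0 B) (TVar 0)) (TVar 0))).

(** L A = forall X (X -> ((A -> (X -> X)) -> X)) *)
Definition tlist (A : ty) : ty :=
  TAll (TArr (TVar 0) (TArr (TArr (lift 1 0 A) (TArr (TVar 0) (TVar 0))) (TVar 0))).

(* Main.v *)
Require Import Defs.
From Stdlib Require Import Arith List Lia Bool.
Import ListNotations.

Ltac dec := repeat (match goal with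
  | |- context [?a <? ?b] => destruct (Nat.ltb_spec a b)
  | |- context [?a =? ?b] => destruct (Nat.eqb_spec a b)
  end; simpl).

Lemma lift_0 : forall A c, lift 0 c A = A.
Proof. induction A; intros; simpl; dec; try (f_equal; auto; lia); auto. Qed.

Lemma lift_lift : forall A k k' c c', c' <= c <= c' + k' ->
  lift k c (lift k' c' A) = lift (k + k') c' A.
Proof.
  induction A; intros k k' c c' H; simpl; dec; try (f_equal; lia); f_equal; auto.
  apply IHA; lia.
Qed.

Lemma subst_lift : forall A Y k d c, d <= c <= d + k ->
  subst c Y (lift (S k) d A) = lift k d A.
Proof.
  induction A; intros Y k d c H; simpl; dec; try (f_equal; lia); f_equal; auto.
  apply IHA; lia.
Qed.

Lemma subst_lift1 : forall A Y c, subst c Y (lift 1 c A) = A.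
Proof. intros. rewrite subst_lift by lia. apply lift_0. Qed.

Lemma subst_lift_gen : forall X C c j d, d <= j ->
  subst (c + j) C (lift c d X) = lift c d (subst j C X).
Proof.
  induction X as [n|a|X1 IH1 X2 IH2|X1 IH1]; intros C c j d H; simpl.
  - dec; try (f_equal; lia). subst. rewrite lift_lift by lia. f_equal; lia.
  - reflexivity.
  - f_equal; auto.
  - f_equal. replace (S (c + j)) with (c + S j) by lia. apply IH1; lia.
Qed.

Lemma subst_subst : forall A C C' c j,
  subst (c + j) C (subst c C' A) = subst c (subst j C C') (subst (S (c + j)) C A).
Proof.
  induction A as [n|a|A1 IH1 A2 IH2|A1 IHA]; intros C C' c j; simpl.
  - dec; try (f_equal; lia).
    + apply subst_lift_gen; lia.
    + rewrite subst_lift by lia. reflexivity.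
  - reflexivity.
  - f_equal; auto.
  - f_equal. replace (S (c + j)) with (S c + j) by lia. apply IHA.
Qed.

Lemma subst_subst0 : forall A C C' j,
  subst j C (subst 0 C' A) = subst 0 (subst j C C') (subst (S j) C A).
Proof. intros. apply (subst_subst A C C' 0 j). Qed.

Lemma lift_subst : forall X C c j, c <= j ->
  lift 1 c (subst j C X) = subst (S j) C (lift 1 c X).
Proof.
  induction X as [n|a|X1 IH1 X2 IH2|X1 IH1]; intros C c j H; simpl.
  - dec; try (f_equal; lia). subst. rewrite lift_lift by lia. reflexivity.
  - reflexivity.
  - f_equal; auto.
  - f_equal. apply IH1; lia.
Qed.

Lemma closed_mono : forall A c c', closed_at c A -> c <= c' -> closed_at c' A.
Proof. induction A; simpl; intros; try tauto; try lia.
  - destruct H; split; eauto.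
  - apply (IHA (S c)); auto; lia. Qed.

Lemma lift_closed : forall A k c, closed_at c A -> lift k c A = A.
Proof. induction A; simpl; intros; dec; try (f_equal; lia); auto.
  - destruct H; f_equal; auto.
  - f_equal; auto. Qed.

Lemma subst_closed : forall A C c j, closed_at c A -> c <= j -> subst j C A = A.
Proof. induction A; simpl; intros; dec; try (f_equal; lia); auto.
  - destruct H; f_equal; eauto.
  - f_equal; apply (IHA C (S c)); auto; lia. Qed.

Lemma occurs_closed : forall A c n, closed_at c A -> c <= n -> occurs n A = false.
Proof. induction A; simpl; intros; dec; auto; try lia.
  - destruct H. rewrite (IHA1 c), (IHA2 c); auto.
  - apply (IHA (S c)); auto; lia. Qed.

Lemma occurs_lift : forall A k m c, occurs m A = true -> m < c -> occurs m (lift k c A) = true.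
Proof. induction A; simpl; intros; dec; auto; try lia; try discriminate.
  - apply Nat.eqb_eq in H; lia.
  - apply orb_true_iff in H; apply orb_true_iff; destruct H; [left|right]; auto.
  - apply IHA; auto; lia. Qed.

Lemma occurs_subst : forall A C m j, occurs m A = true -> m < j -> occurs m (subst j C A) = true.
Proof. induction A; simpl; intros; dec; auto; try lia; try discriminate.
  - apply Nat.eqb_eq in H; lia.
  - apply Nat.eqb_eq in H; lia.
  - apply orb_true_iff in H; apply orb_true_iff; destruct H; [left|right]; auto.
  - apply IHA; auto; lia. Qed.

Lemma proper_lift : forall A k c, proper A -> proper (lift k c A).
Proof. induction A; simpl; intros; dec; auto.
  - destruct H; split; auto.
  - destruct H; split; auto. apply occurs_lift; auto; lia. Qed.

Lemma proper_subst : forall A C j, proper A -> proper C -> proper (subst j C A).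
Proof. induction A; simpl; intros; dec; auto using proper_lift.
  - destruct H; split; auto.
  - destruct H; split; auto. apply occurs_subst; auto; lia. Qed.

Lemma typing_subst : forall e G t T, typing e G t T ->
  forall j C, proper C -> typing e (map (subst j C) G) t (subst j C T).
Proof.
  induction 1; intros j D HD; simpl.
  - apply T_ax. rewrite nth_error_map, H. reflexivity.
  - apply T_arr_i. apply proper_subst; auto. apply (IHtyping j D HD).
  - eapply T_arr_e. apply (IHtyping1 j D HD). apply (IHtyping2 j D HD).
  - apply T_all_i. apply occurs_subst; auto; lia.
    specialize (IHtyping (S j) D HD).
    rewrite map_map in *.
    erewrite map_ext. apply IHtyping.
    intros a. simpl. apply lift_subst. lia.
  - unfold inst. rewrite subst_subst0. apply T_all_e; [assumption| |].
    apply proper_subst; auto. apply (IHtyping j D HD).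
Qed.

Lemma map_subst_lift : forall G C, map (subst 0 C) (map (lift 1 0) G) = G.
Proof. intros. rewrite map_map. rewrite <- map_id. apply map_ext. intros; apply subst_lift1. Qed.

Lemma typing_unshift : forall e G t T C, proper C ->
  typing e (map (lift 1 0) G) t T -> typing e G t (subst 0 C T).
Proof. intros. rewrite <- (map_subst_lift G C). apply typing_subst; auto. Qed.

Fixpoint inst_list (T : ty) (Cs : list ty) : option ty :=
  match Cs with
  | [] => Some T
  | C :: Cs' => match T with TAll A => inst_list (inst A C) Cs' | _ => None end
  end.

Lemma inst_list_subst : forall Ds X j C U,
  inst_list (subst j C X) (map (subst j C) Ds) = Some U ->
  (exists U', inst_list X Ds = Some U' /\ U = subst j C U') \/
  (exists k n, inst_list X (firstn k Ds) = Some (TVar n)).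
Proof.
  induction Ds as [|D Ds IH]; intros X j C U H; simpl in *.
  - left. exists X. inversion H; auto.
  - destruct X as [n|a|X1 X2|X1]; simpl in H.
    + right. exists 0, n. reflexivity.
    + discriminate.
    + discriminate.
    + unfold inst in H. rewrite <- subst_subst0 in H.
      destruct (IH _ _ _ _ H) as [[U' [H1 H2]]|[k [n Hk]]].
      * left. exists U'. simpl. auto.
      * right. exists (S k), n. simpl. auto.
Qed.

Definition shapeok G w U := match U with
  | TArr D E => typing true (D :: G) w E | TAll _ => True | _ => False end.
Definition absinv G w T := forall Cs U, Forall proper Cs -> inst_list T Cs = Some U -> shapeok G w U.

Lemma Forall_firstn' : forall (P : ty -> Prop) k l, Forall P l -> Forall P (firstn k l).
Proof. induction k; intros; simpl; auto. destruct l; auto. inversion H; subst; constructor; auto. Qed.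

Lemma abs_gen : forall e G t T, typing e G t T -> e = true -> forall w, t = Lam w -> absinv G w T.
Proof.
  induction 1; intros He w0 Ht; try discriminate.
  - inversion Ht; subst. intros Cs U HF HI. destruct Cs; simpl in HI.
    + inversion HI; subst; simpl; auto.
    + discriminate.
  - subst. intros Cs U HF HI. destruct Cs as [|C1 Cs]; simpl in HI.
    + inversion HI; simpl; auto.
    + inversion HF; subst.
      assert (HF' : Forall proper (map (lift 1 0) Cs)).
      { apply Forall_map. eapply Forall_impl; [|eauto]. intros; apply proper_lift; auto. }
      rewrite <- (map_subst_lift Cs C1) in HI. unfold inst in HI.
      apply inst_list_subst in HI.
      destruct HI as [[U' [H1 H2]]|[k [n Hk]]].
      * specialize (IHtyping eq_refl w0 eq_refl _ _ HF' H1).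
        subst U. destruct U'; simpl in *; try contradiction; auto.
        rewrite <- (map_subst_lift G C1).
        apply (typing_subst _ _ _ _ IHtyping 0 C1); auto.
      * destruct (IHtyping eq_refl w0 eq_refl _ _ (Forall_firstn' _ k _ HF') Hk).
  - subst. intros Cs U HF HI. apply (IHtyping eq_refl w0 eq_refl (C :: Cs)); simpl; auto.
Qed.

Lemma abs_inv : forall G w D E, typing true G (Lam w) (TArr D E) -> typing true (D :: G) w E.
Proof. intros. apply (abs_gen _ _ _ _ H eq_refl w eq_refl [] (TArr D E)); auto. Qed.

Lemma abs_shape : forall e G w T, typing e G (Lam w) T -> e = true ->
  (exists D E, T = TArr D E) \/ (exists A, T = TAll A).
Proof. intros. pose proof (abs_gen _ _ _ _ H H0 w eq_refl [] T (Forall_nil _) eq_refl).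
  destruct T; simpl in H1; try tauto; eauto. Qed.

Fixpoint fv (n : nat) (t : term) : bool :=
  match t with
  | Var m => m =? n
  | Lam w => fv (S n) w
  | App u v => fv n u || fv n v
  end.

Lemma typing_ctx : forall e G t T, typing e G t T -> forall G',
  (forall n, fv n t = true -> nth_error G n = nth_error G' n) -> typing e G' t T.
Proof.
  induction 1; intros G' HG; simpl in *.
  - apply T_ax. rewrite <- HG; auto. apply Nat.eqb_refl.
  - apply T_arr_i; auto. apply IHtyping. intros [|n] Hn; simpl; auto.
  - eapply T_arr_e; [apply IHtyping1|apply IHtyping2]; intros n Hn; apply HG; rewrite Hn; auto using orb_true_r.
  - apply T_all_i; auto. apply IHtyping. intros n Hn. rewrite !nth_error_map, HG; auto.
  - apply T_all_e; auto.
Qed.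

Lemma typing_fv : forall e G t T, typing e G t T -> forall n, fv n t = true -> n < length G.
Proof.
  induction 1; intros k Hk; simpl in *.
  - apply Nat.eqb_eq in Hk; subst. apply nth_error_Some. congruence.
  - specialize (IHtyping (S k) Hk). simpl in IHtyping. lia.
  - apply orb_true_iff in Hk. destruct Hk; eauto.
  - rewrite <- (length_map (lift 1 0) G). auto.
  - auto.
Qed.

Lemma nth_some : forall (G : list ty) n, n < length G -> exists U, nth_error G n = Some U.
Proof. intros. destruct (nth_error G n) eqn:E; eauto. apply nth_error_None in E. lia. Qed.

Lemma typing_closed_term : forall e G t T G', typing e G t T ->
  (forall n, fv n t = false) -> typing e G' t T.
Proof. intros. eapply typing_ctx; eauto. intros n Hn. rewrite H0 in Hn; discriminate. Qed.

Definition cctx (G : list ty) := Forall (closed_at 0) G.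

Lemma cctx_lift : forall G, cctx G -> map (lift 1 0) G = G.
Proof. induction 1; simpl; auto. rewrite IHForall, lift_closed; auto. Qed.

Fixpoint ntail (U : ty) : Prop :=
  match U with TArr _ Q => ntail Q | TAll _ => False | _ => True end.

Lemma nth_lift_closed : forall G n U, nth_error G n = Some U -> closed_at 0 U ->
  nth_error (map (lift 1 0) G) n = Some U.
Proof. intros. rewrite nth_error_map, H. simpl. rewrite lift_closed; auto. Qed.

Lemma sp0 : forall e G t T, typing e G t T -> forall n U, t = Var n ->
  nth_error G n = Some U -> closed_at 0 U -> ntail U -> T = U.
Proof.
  induction 1; intros k U Ht HG Hc Hn; try discriminate.
  - inversion Ht; subst; congruence.
  - subst. assert (A = U) by (eapply IHtyping; eauto using nth_lift_closed).
    subst. rewrite (occurs_closed U 0 0) in H; auto; discriminate.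
  - subst. assert (TAll A = U) by (eapply IHtyping; eauto). subst; simpl in Hn; contradiction.
Qed.

Lemma sp1 : forall e G t T, typing e G t T -> forall n c U, t = App (Var n) c ->
  nth_error G n = Some U -> closed_at 0 U -> ntail U -> exists P, U = TArr P T /\ typing e G c P.
Proof.
  induction 1; intros k c U Ht HG Hc Hn; try discriminate.
  - inversion Ht; subst. exists B. split; auto. symmetry. eapply sp0; eauto.
  - subst. destruct (IHtyping k c U eq_refl) as [P [HU _]]; eauto using nth_lift_closed.
    subst. simpl in Hc. destruct Hc. rewrite (occurs_closed A 0 0) in H; auto; discriminate.
  - subst. destruct (IHtyping k c U eq_refl) as [P [HU _]]; eauto. subst; simpl in Hn; contradiction.
Qed.

Lemma sp2 : forall e G t T, typing e G t T -> forall n c1 c2 U, t = App (App (Var n) c1) c2 ->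
  nth_error G n = Some U -> closed_at 0 U -> ntail U ->
  exists P Q, U = TArr P (TArr Q T) /\ typing e G c1 P /\ typing e G c2 Q.
Proof.
  induction 1; intros k c1 c2 U Ht HG Hc Hn; try discriminate.
  - inversion Ht; subst. destruct (sp1 _ _ _ _ H k c1 U eq_refl) as [P [HU HP]]; auto.
    exists P, B. subst. auto.
  - subst. destruct (IHtyping k c1 c2 U eq_refl) as [P [Q [HU _]]]; eauto using nth_lift_closed.
    subst. simpl in Hc. destruct Hc as [_ [_ Hc]]. rewrite (occurs_closed A 0 0) in H; auto; discriminate.
  - subst. destruct (IHtyping k c1 c2 U eq_refl) as [P [Q [HU _]]]; eauto. subst; simpl in Hn; contradiction.
Qed.

Definition okU (U : ty) : Prop :=
  U = O \/ (exists P, closed_at 0 P /\ proper P /\ U = TArr P O) \/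
  (exists P Q, closed_at 0 P /\ proper P /\ closed_at 0 Q /\ proper Q /\ U = TArr P (TArr Q O)).

Lemma okU_closed : forall U, okU U -> closed_at 0 U /\ ntail U.
Proof. intros U [H|[[P [H1 [H2 H3]]]|[P [Q [H1 [H2 [H3 [H4 H5]]]]]]]]; subst; simpl; tauto. Qed.

Definition okctx G := forall n U, nth_error G n = Some U -> okU U.

Lemma app_peel : forall e G t T, typing e G t T -> forall u v, t = App u v -> cctx G ->
  exists B C, typing e G u (TArr B C) /\ typing e G v B.
Proof.
  induction 1; intros u0 v0 Ht Hc; try discriminate.
  - inversion Ht; subst. eauto.
  - subst. rewrite (cctx_lift G Hc) in *. eauto.
  - subst. eauto.
Qed.

Fixpoint nargs (t : term) : nat := match t with App u _ => S (nargs u) | _ => 0 end.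

Lemma var_some : forall e G n T, typing e G (Var n) T -> exists U, nth_error G n = Some U.
Proof. intros. apply nth_some. eapply typing_fv; eauto. simpl. apply Nat.eqb_refl. Qed.

Lemma app_var_some : forall e G n t T, typing e G t T -> fv n t = true -> exists U, nth_error G n = Some U.
Proof. intros. apply nth_some. eapply typing_fv; eauto. Qed.

Lemma over : forall e G, okctx G -> cctx G -> forall x, normal x -> 2 <= nargs x ->
  forall v T, typing e G (App x v) T -> False.
Proof.
  intros e G Hok Hc. induction x as [n|w IH|y IHy c IHc]; intros Hn Hna v T HT; simpl in Hna; try lia.
  destruct (app_peel _ _ _ _ HT _ _ eq_refl Hc) as [B [C [Hx _]]].
  destruct y as [m|w|z d].
  - simpl in Hna; lia.
  - simpl in Hn; contradiction.
  - destruct z as [m|w|z' d'].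
    + destruct (app_var_some _ _ m _ _ Hx) as [U HU]. simpl. rewrite Nat.eqb_refl; auto.
      destruct (okU_closed U (Hok _ _ HU)) as [Hc1 Hn1].
      destruct (sp2 _ _ _ _ Hx m d c U eq_refl HU Hc1 Hn1) as [P [Q [HU' _]]].
      destruct (Hok _ _ HU) as [H|[[P' [_ [_ H]]]|[P' [Q' [_ [_ [_ [_ H]]]]]]]]; subst; try discriminate;
      inversion H; subst; discriminate.
    + simpl in Hn. tauto.
    + apply (IHy) with c (TArr B C); auto.
      * simpl in Hn. destruct Hn; auto.
      * simpl. lia.
Qed.

Lemma classify : forall G w T, okctx G -> cctx G -> typing true G w T -> normal w ->
  (exists w', w = Lam w') \/ (exists n, w = Var n /\ nth_error G n = Some T) \/
  (exists n c P, w = App (Var n) c /\ nth_error G n = Some (TArr P T) /\ typing true G c P) \/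
  (exists n c1 c2 P Q, w = App (App (Var n) c1) c2 /\ nth_error G n = Some (TArr P (TArr Q T))
     /\ typing true G c1 P /\ typing true G c2 Q).
Proof.
  intros G w T Hok Hc HT Hn. destruct w as [n|w'|u v].
  - right; left. destruct (var_some _ _ _ _ HT) as [U HU]. exists n. split; auto.
    destruct (okU_closed U (Hok _ _ HU)). rewrite HU. f_equal. symmetry. eapply sp0; eauto.
  - left; eauto.
  - destruct u as [n|w'|u1 v1].
    + right; right; left. destruct (app_var_some _ _ n _ _ HT) as [U HU]. simpl; rewrite Nat.eqb_refl; auto.
      destruct (okU_closed U (Hok _ _ HU)).
      destruct (sp1 _ _ _ _ HT n v U eq_refl HU) as [P [HP1 HP2]]; auto. subst. eauto 6.
    + simpl in Hn; contradiction.
    + destruct u1 as [n|w'|u2 v2].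
      * right; right; right. destruct (app_var_some _ _ n _ _ HT) as [U HU]. simpl; rewrite Nat.eqb_refl; auto.
        destruct (okU_closed U (Hok _ _ HU)).
        destruct (sp2 _ _ _ _ HT n v1 v U eq_refl HU) as [P [Q [HP1 [HP2 HP3]]]]; auto. subst. eauto 10.
      * simpl in Hn; tauto.
      * exfalso. apply (over true _ Hok Hc (App (App u2 v2) v1)) with v T; auto.
        simpl in Hn |- *. destruct Hn; auto. simpl. lia.
Qed.

Definition Iy := TAll (TArr (TVar 0) (TVar 0)).
Definition Dy := TArr Iy Iy.
Definition sK := Lam (App (Var 0) (Var 0)).

Lemma Dy_closed : closed_at 0 Dy.
Proof. simpl. lia. Qed.
Lemma Dy_proper : proper Dy.
Proof. simpl. auto. Qed.

Fixpoint csub (A : ty) : ty :=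
  match A with
  | TVar n => TVar n
  | TConst a => if a =? 0 then Dy else TConst a
  | TArr A1 A2 => TArr (csub A1) (csub A2)
  | TAll A1 => TAll (csub A1)
  end.

Lemma csub_lift : forall A k c, csub (lift k c A) = lift k c (csub A).
Proof. induction A; intros; simpl; dec; auto; try (f_equal; auto). Qed.

Lemma csub_subst : forall A j C, csub (subst j C A) = subst j (csub C) (csub A).
Proof. induction A; intros; simpl; dec; auto; try (f_equal; auto).
  all: try apply csub_lift. Qed.

Lemma csub_occurs : forall A n, occurs n (csub A) = occurs n A.
Proof. induction A; intros; simpl; dec; auto.
  rewrite IHA1, IHA2; auto. Qed.

Lemma csub_proper : forall A, proper A -> proper (csub A).
Proof. induction A; simpl; intros; dec; auto using Dy_proper.
  - destruct H; auto.
  - destruct H; split; auto. rewrite csub_occurs; auto. Qed.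

Lemma csub_noO : forall A, contains_O A = false -> csub A = A.
Proof. unfold contains_O. induction A; simpl; intros; dec; auto; try discriminate.
  - apply orb_false_iff in H. destruct H. f_equal; auto.
  - f_equal; auto. Qed.

Lemma sK_typing : forall G, typing true G sK Dy.
Proof.
  intros. unfold sK, Dy. apply T_arr_i. simpl; auto.
  eapply T_arr_e; [|apply T_ax; reflexivity].
  change (TArr Iy Iy) with (inst (TArr (TVar 0) (TVar 0)) Iy).
  apply T_all_e; auto. simpl; auto. apply T_ax; reflexivity.
Qed.

Fixpoint lams (U : ty) : term := match U with TArr _ Q => Lam (lams Q) | _ => sK end.
Definition cod1 (U : ty) := match U with TArr _ Q => Q | _ => U end.

Lemma lams_normal : forall U, normal (lams U).
Proof. induction U; simpl; auto. Qed.

Lemma lams_fv : forall U n, fv n (lams U) = false.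
Proof. induction U; intros; simpl; auto. Qed.

Lemma okU_cod : forall P C, okU (TArr P C) -> okU C.
Proof. intros P C [H|[[P' [H1 [H2 H3]]]|[P' [Q [H1 [H2 [H3 [H4 H5]]]]]]]].
  - discriminate.
  - inversion H3; subst. left; auto.
  - inversion H5; subst. right; left. eauto. Qed.

Lemma lams_typing : forall U G, okU U -> typing true G (lams U) (csub U).
Proof. intros U G [H|[[P [H1 [H2 H3]]]|[P [Q [H1 [H2 [H3 [H4 H5]]]]]]]]; subst; simpl.
  - apply sK_typing.
  - apply T_arr_i. apply csub_proper; auto. apply sK_typing.
  - apply T_arr_i. apply csub_proper; auto. apply T_arr_i. apply csub_proper; auto. apply sK_typing.
Qed.

Definition shb (b : nat -> option ty) : nat -> option ty :=
  fun n => match n with 0 => None | S m => b m end.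

Fixpoint repl (b : nat -> option ty) (t : term) : term :=
  match t with
  | Var n => match b n with Some U => lams U | None => Var n end
  | Lam w => Lam (repl (shb b) w)
  | App (App (Var n) c1) c2 =>
      match b n with Some U => lams (cod1 (cod1 U))
      | None => App (App (Var n) (repl b c1)) (repl b c2) end
  | App (Var n) c1 =>
      match b n with Some U => lams (cod1 U) | None => App (Var n) (repl b c1) end
  | App u v => App (repl b u) (repl b v)
  end.

Definition good (b : nat -> option ty) G :=
  forall n U, b n = Some U -> nth_error G n = Some U /\ okU U.

Lemma repl_typing : forall G t T, typing true G t T -> forall b, normal t -> good b G ->
  typing true (map csub G) (repl b t) (csub T) /\ normal (repl b t).
Proof.
  induction 1; intros b Hn Hg.
  - simpl. destruct (b n) as [U|] eqn:Eb.
    + destruct (Hg _ _ Eb) as [H1 H2]. rewrite H in H1. inversion H1; subst.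
      split; [apply lams_typing; auto | apply lams_normal].
    + split; simpl; auto. apply T_ax. rewrite nth_error_map, H; auto.
  - simpl. destruct (IHtyping (shb b)) as [H1 H2]; auto.
    { intros [|n] U HU; simpl in HU; try discriminate. destruct (Hg _ _ HU); simpl; auto. }
    split; auto. apply T_arr_i; auto. apply csub_proper; auto.
  - rename H into Hu, H0 into Hv.
    assert (Ht : typing true G (App u v) C) by (eapply T_arr_e; eauto).
    destruct u as [n|w|u1 v1].
    + simpl. destruct (b n) as [U|] eqn:Eb.
      * destruct (Hg _ _ Eb) as [H1 H2]. destruct (okU_closed U H2).
        destruct (sp1 _ _ _ _ Ht n v U eq_refl H1) as [P [HP _]]; auto. subst U.
        split; [apply lams_typing; eapply okU_cod; eauto | apply lams_normal].
      * destruct (IHtyping1 b) as [H1 _]; simpl; auto. simpl in H1. rewrite Eb in H1.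
        destruct (IHtyping2 b) as [H3 H4]; auto. simpl in Hn; tauto.
        split; [eapply T_arr_e; eauto | simpl; auto].
    + simpl in Hn; contradiction.
    + destruct u1 as [n|w|u2 v2].
      * simpl. destruct (b n) as [U|] eqn:Eb.
        -- destruct (Hg _ _ Eb) as [H1 H2]. destruct (okU_closed U H2).
           destruct (sp2 _ _ _ _ Ht n v1 v U eq_refl H1) as [P [Q [HP _]]]; auto. subst U.
           split; [apply lams_typing; simpl; do 2 eapply okU_cod; eauto | apply lams_normal].
        -- simpl in Hn. destruct Hn as [[_ Hn1] Hn2].
           destruct (IHtyping1 b) as [H1 H1']; simpl; auto. simpl in H1, H1'. rewrite Eb in H1, H1'.
           destruct (IHtyping2 b) as [H3 H4]; auto.
           split; [eapply T_arr_e; eauto | simpl; auto].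
      * simpl in Hn; tauto.
      * simpl in Hn. destruct Hn as [Hn1 Hn2].
        destruct (IHtyping1 b) as [H1 H1']; auto.
        destruct (IHtyping2 b) as [H3 H4]; auto.
        assert (E : repl b (App (App (App u2 v2) v1) v) = App (repl b (App (App u2 v2) v1)) (repl b v)) by reflexivity.
        rewrite E. split; [eapply T_arr_e; eauto|].
        destruct u2 as [m|w|u3 v3].
        -- destruct (b m) as [U|] eqn:Eb.
           ++ exfalso. destruct (Hg _ _ Eb) as [HU1 HU2]. destruct (okU_closed U HU2).
              destruct (sp2 _ _ _ _ Hu m v2 v1 U eq_refl HU1) as [P [Q [HP _]]]; auto. subst U.
              destruct HU2 as [HH|[[P' [_ [_ HH]]]|[P' [Q' [_ [_ [_ [_ HH]]]]]]]]; inversion HH; subst; discriminate.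
           ++ simpl in H1' |- *. rewrite Eb in H1' |- *. simpl. simpl in H1'. tauto.
        -- simpl in Hn1; tauto.
        -- simpl in H1' |- *. tauto.
  - subst. destruct (IHtyping b) as [H1 H2]; auto.
    { intros n U HU. destruct (Hg _ _ HU) as [H3 H4]. destruct (okU_closed U H4). split; auto.
      apply nth_lift_closed; auto. }
    split; auto. simpl. apply T_all_i. rewrite csub_occurs; auto.
    rewrite map_map in *. erewrite map_ext; [apply H1|]. intros; simpl. symmetry; apply csub_lift.
  - destruct (IHtyping b) as [K1 K2]; auto. split; auto.
    unfold inst. rewrite csub_subst. apply T_all_e; auto. apply csub_proper; auto.
Qed.

Lemma repl_fv : forall t b n, fv n (repl b t) = true -> b n = None /\ fv n t = true.
Proof.
  induction t as [m|w IH|u IHu v IHv]; intros b n H.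
  - simpl in H. destruct (b m) eqn:E. rewrite lams_fv in H; discriminate.
    simpl in H. apply Nat.eqb_eq in H. subst. simpl. rewrite Nat.eqb_refl. auto.
  - simpl in H. apply IH in H. simpl in H. simpl. auto.
  - destruct u as [m|w|u1 v1].
    + simpl in H. destruct (b m) eqn:E. rewrite lams_fv in H; discriminate.
      simpl in H. apply orb_true_iff in H. destruct H as [H|H].
      * apply Nat.eqb_eq in H. subst. simpl. rewrite Nat.eqb_refl. auto.
      * apply IHv in H. simpl. rewrite orb_true_iff. tauto.
    + change (fv n (repl b (Lam w)) || fv n (repl b v) = true) in H.
      apply orb_true_iff in H. simpl. rewrite orb_true_iff.
      destruct H as [H|H]; [apply IHu in H|apply IHv in H]; tauto.
    + destruct u1 as [m|w|u2 v2].
      * simpl in H. destruct (b m) eqn:E. rewrite lams_fv in H; discriminate.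
        assert (Hr : repl b (App (Var m) v1) = App (Var m) (repl b v1)) by (simpl; rewrite E; auto).
        change (fv n (App (Var m) (repl b v1)) || fv n (repl b v) = true) in H.
        rewrite <- Hr in H. apply orb_true_iff in H.
        change (fv n (App (App (Var m) v1) v)) with (fv n (App (Var m) v1) || fv n v).
        rewrite orb_true_iff.
        destruct H as [H|H]; [apply IHu in H|apply IHv in H]; tauto.
      * change (fv n (repl b (App (Lam w) v1)) || fv n (repl b v) = true) in H.
        apply orb_true_iff in H.
        change (fv n (App (App (Lam w) v1) v)) with (fv n (App (Lam w) v1) || fv n v).
        rewrite orb_true_iff.
        destruct H as [H|H]; [apply IHu in H|apply IHv in H]; tauto.
      * change (fv n (repl b (App (App u2 v2) v1)) || fv n (repl b v) = true) in H.
        apply orb_true_iff in H.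
        change (fv n (App (App (App u2 v2) v1) v)) with (fv n (App (App u2 v2) v1) || fv n v).
        rewrite orb_true_iff.
        destruct H as [H|H]; [apply IHu in H|apply IHv in H]; tauto.
Qed.

Inductive sub (s : term) : term -> Prop :=
  | sub_refl : sub s s
  | sub_lam : forall w, sub s w -> sub s (Lam w)
  | sub_appl : forall u v, sub s u -> sub s (App u v)
  | sub_appr : forall u v, sub s v -> sub s (App u v).

Lemma lams_sub : forall U, sub sK (lams U).
Proof. induction U; simpl; try apply sub_refl. apply sub_lam; auto. Qed.

Lemma repl_sub : forall t b n U, b n = Some U -> fv n t = true -> sub sK (repl b t).
Proof.
  induction t as [m|w IH|u IHu v IHv]; intros b n U Hb H.
  - simpl in H. apply Nat.eqb_eq in H. subst. simpl. rewrite Hb. apply lams_sub.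
  - simpl in H |- *. apply sub_lam. apply (IH (shb b) (S n) U); auto.
  - destruct u as [m|w|u1 v1].
    + simpl. destruct (b m) eqn:E. apply lams_sub.
      simpl in H. apply orb_true_iff in H. destruct H as [H|H].
      * apply Nat.eqb_eq in H. subst. congruence.
      * apply sub_appr. eauto.
    + change (sub sK (App (repl b (Lam w)) (repl b v))).
      simpl in H. apply orb_true_iff in H. destruct H as [H|H].
      * apply sub_appl. apply (IHu b n U); auto.
      * apply sub_appr. eauto.
    + destruct u1 as [m|w|u2 v2].
      * simpl. destruct (b m) eqn:E. apply lams_sub.
        assert (Hr : repl b (App (Var m) v1) = App (Var m) (repl b v1)) by (simpl; rewrite E; auto).
        rewrite <- Hr.
        change (fv n (App (Var m) v1) || fv n v = true) in H.
        apply orb_true_iff in H. destruct H as [H|H].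
        -- apply sub_appl. eauto.
        -- apply sub_appr. eauto.
      * change (sub sK (App (repl b (App (Lam w) v1)) (repl b v))).
        change (fv n (App (Lam w) v1) || fv n v = true) in H.
        apply orb_true_iff in H. destruct H as [H|H].
        -- apply sub_appl. eauto.
        -- apply sub_appr. eauto.
      * change (sub sK (App (repl b (App (App u2 v2) v1)) (repl b v))).
        change (fv n (App (App u2 v2) v1) || fv n v = true) in H.
        apply orb_true_iff in H. destruct H as [H|H].
        -- apply sub_appl. eauto.
        -- apply sub_appr. eauto.
Qed.

Lemma typing_sub : forall e G t T, typing e G t T -> forall s, sub s t ->
  exists G' T', typing e G' s T'.
Proof.
  induction 1; intros s Hs.
  - inversion Hs; subst. exists G, A. apply T_ax; auto.
  - inversion Hs; subst; eauto. exists G, (TArr B C). apply T_arr_i; auto.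
  - inversion Hs; subst; eauto. exists G, C. eapply T_arr_e; eauto.
  - eauto.
  - eauto.
Qed.

Fixpoint tsize (A : ty) : nat :=
  match A with TArr A1 A2 => S (tsize A1 + tsize A2) | TAll A1 => S (tsize A1) | _ => 1 end.

Lemma tsize_lift : forall A k c, tsize (lift k c A) = tsize A.
Proof. induction A; intros; simpl; dec; auto. Qed.

Lemma f0var : forall G t T, typing false G t T -> forall n U, t = Var n -> nth_error G n = Some U ->
  T = U \/ (exists A, T = TAll A /\ tsize U <= tsize A).
Proof.
  induction 1; intros k U Ht HU; try discriminate.
  - inversion Ht; subst. left; congruence.
  - subst. destruct (IHtyping k (lift 1 0 U) eq_refl) as [H1|[A' [H1 H2]]].
    + rewrite nth_error_map, HU; auto.
    + subst. right. exists (lift 1 0 U). rewrite tsize_lift; auto.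
    + subst. right. exists (TAll A'). simpl. rewrite tsize_lift in H2. split; auto.
Qed.

Lemma f0_selfapp : forall G t T, typing false G t T -> forall n, t = App (Var n) (Var n) -> False.
Proof.
  induction 1; intros k Ht; try discriminate.
  - inversion Ht; subst.
    destruct (var_some _ _ _ _ H) as [U HU].
    destruct (f0var _ _ _ H k U eq_refl HU) as [H1|[A [H1 _]]]; [|discriminate].
    subst U.
    destruct (f0var _ _ _ H0 k _ eq_refl HU) as [H2|[A [H2 H3]]].
    + assert (tsize B = tsize (TArr B C)) by congruence. simpl in H1. lia.
    + subst B. simpl in H3. lia.
  - eauto.
Qed.

Lemma sK_notF0 : forall G T, typing false G sK T -> False.
Proof.
  intros G T H. remember sK as t. induction H; try discriminate.
  - inversion Heqt; subst. eapply f0_selfapp; eauto.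
  - auto.
Qed.

Lemma arg_F0 : forall A G u, input_type A -> contains_O A = false -> okctx G ->
  typing true G u A -> normal u -> forall G0, typing false G0 u A.
Proof.
  intros A G u HA HO Hok Hu Hn G0.
  set (b := fun n => nth_error G n).
  assert (Hg : good b G) by (intros n U H; split; auto; eapply Hok; eauto).
  destruct (repl_typing _ _ _ Hu b Hn Hg) as [H1 H2]. rewrite csub_noO in H1 by auto.
  assert (Hcl : forall n, fv n (repl b u) = false).
  { intros n. destruct (fv n (repl b u)) eqn:E; auto.
    apply repl_fv in E. destruct E as [E1 E2].
    apply (typing_fv _ _ _ _ Hu) in E2. apply nth_some in E2. destruct E2 as [U HU].
    unfold b in E1. congruence. }
  destruct HA as [_ [_ HA]].
  assert (H3 := HA _ H2 (typing_closed_term _ _ _ _ [] H1 Hcl)).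
  assert (Hcu : forall n, fv n u = false).
  { intros n. destruct (fv n u) eqn:E; auto. exfalso.
    assert (E' := E). apply (typing_fv _ _ _ _ Hu) in E'. apply nth_some in E'. destruct E' as [U HU].
    assert (Hs := repl_sub u b n U HU E).
    destruct (typing_sub _ _ _ _ H3 _ Hs) as [G' [T' HT']].
    eapply sK_notF0; eauto. }
  apply (typing_closed_term _ [] _ _ G0); auto.
  apply HA; auto. apply (typing_closed_term _ G _ _ [] Hu Hcu).
Qed.

Lemma okU_O : okU O.
Proof. left; auto. Qed.
Lemma okU_1 : forall P, closed_at 0 P -> proper P -> okU (TArr P O).
Proof. intros. right; left; eauto. Qed.
Lemma okU_2 : forall P Q, closed_at 0 P -> proper P -> closed_at 0 Q -> proper Q -> okU (TArr P (TArr Q O)).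
Proof. intros. right; right; eauto 10. Qed.

Lemma okctx_nil : okctx [].
Proof. intros [|n] U H; discriminate. Qed.
Lemma okctx_cons : forall U G, okU U -> okctx G -> okctx (U :: G).
Proof. intros U G H1 H2 [|n] V H; simpl in H. inversion H; subst; auto. eapply H2; eauto. Qed.

Lemma closed_O : closed_at 0 O.
Proof. simpl; auto. Qed.
Lemma proper_O : proper O.
Proof. simpl; auto. Qed.

Lemma top_lam : forall t T, typing true [] t T -> normal t -> exists w, t = Lam w.
Proof.
  intros t T H Hn.
  destruct (classify [] t T okctx_nil (Forall_nil _) H Hn) as
    [[w' Hw]|[[n [_ Hn1]]|[[n [c [P [_ [Hn1 _]]]]]|[n [c1 [c2 [P [Q [_ [Hn1 _]]]]]]]]]];
    eauto; destruct n; discriminate.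
Qed.

Lemma notlam_O : forall G w, typing true G (Lam w) O -> False.
Proof. intros. destruct (abs_shape _ _ _ _ H eq_refl) as [[D [E H1]]|[A H1]]; discriminate. Qed.

Lemma input_tand : forall A B, input_type A -> input_type B ->
  contains_O A = false -> contains_O B = false -> input_type (tand A B).
Proof.
  intros A B HA HB HOA HOB.
  pose proof HA as [HcA [HpA _]]. pose proof HB as [HcB [HpB _]].
  unfold tand. rewrite (lift_closed A), (lift_closed B) by auto.
  split; [|split].
  - unfold closed_ty. simpl. repeat split; try lia; apply (closed_mono _ 0); auto.
  - simpl. split; [tauto|]. rewrite !orb_true_r. auto.
  - intros t Hn Ht.
    assert (H1 : typF [] t (TArr (TArr A (TArr B O)) O)).
    { assert (E : inst (TArr (TArr A (TArr B (TVar 0))) (TVar 0)) O = TArr (TArr A (TArr B O)) O).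
      { unfold inst. simpl. rewrite !(subst_closed _ _ 0); auto. }
      rewrite <- E. apply T_all_e; auto. apply proper_O. }
    destruct (top_lam _ _ H1 Hn) as [w Hw]. subst t.
    apply abs_inv in H1. simpl in Hn.
    set (G1 := [TArr A (TArr B O)]).
    assert (Hok : okctx G1) by (apply okctx_cons; [apply okU_2; auto using closed_O, proper_O|apply okctx_nil]).
    assert (Hc : cctx G1) by (constructor; [simpl; auto using closed_O|constructor]).
    destruct (classify G1 w O Hok Hc H1 Hn) as
      [[w' Hw]|[[n [_ Hn1]]|[[n [c [P [_ [Hn1 _]]]]]|[n [c1 [c2 [P [Q [Hw [Hn1 [Hc1 Hc2]]]]]]]]]]].
    + subst. exfalso. eapply notlam_O; eauto.
    + destruct n as [|[|n]]; simpl in Hn1; discriminate.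
    + destruct n as [|[|n]]; simpl in Hn1; try discriminate.
    + destruct n as [|[|n]]; simpl in Hn1; try discriminate. inversion Hn1; subst P Q w.
      simpl in Hn. destruct Hn as [[_ Hn1'] Hn2].
      apply T_all_i. simpl. rewrite orb_true_r; auto.
      simpl. apply T_arr_i. simpl. repeat split; auto.
      eapply T_arr_e; [eapply T_arr_e|].
      * apply T_ax. reflexivity.
      * eapply arg_F0; eauto.
      * eapply arg_F0; eauto.
Qed.

Lemma input_tor : forall A B, input_type A -> input_type B ->
  contains_O A = false -> contains_O B = false -> input_type (tor A B).
Proof.
  intros A B HA HB HOA HOB.
  pose proof HA as [HcA [HpA _]]. pose proof HB as [HcB [HpB _]].
  unfold tor. rewrite (lift_closed A), (lift_closed B) by auto.
  split; [|split].
  - unfold closed_ty. simpl. repeat split; try lia; apply (closed_mono _ 0); auto.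
  - simpl. split; [tauto|]. rewrite !orb_true_r. auto.
  - intros t Hn Ht.
    assert (H1 : typF [] t (TArr (TArr A O) (TArr (TArr B O) O))).
    { assert (E : inst (TArr (TArr A (TVar 0)) (TArr (TArr B (TVar 0)) (TVar 0))) O
                  = TArr (TArr A O) (TArr (TArr B O) O)).
      { unfold inst. simpl. rewrite !(subst_closed _ _ 0); auto. }
      rewrite <- E. apply T_all_e; auto. apply proper_O. }
    destruct (top_lam _ _ H1 Hn) as [w Hw]. subst t.
    apply abs_inv in H1. simpl in Hn.
    assert (Hok : okctx [TArr A O]) by (apply okctx_cons; [apply okU_1; auto|apply okctx_nil]).
    assert (Hc : cctx [TArr A O]) by (constructor; [simpl; auto using closed_O|constructor]).
    destruct (classify _ w _ Hok Hc H1 Hn) as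
      [[w' Hw]|[[n [_ Hn1]]|[[n [c [P [_ [Hn1 _]]]]]|[n [c1 [c2 [P [Q [Hw [Hn1 [Hc1 Hc2]]]]]]]]]]].
    2: { destruct n as [|[|n]]; simpl in Hn1; try discriminate.
         inversion Hn1. subst A. unfold contains_O in HOA. simpl in HOA. rewrite orb_true_r in HOA. discriminate. }
    2: { destruct n as [|[|n]]; simpl in Hn1; try discriminate. }
    2: { destruct n as [|[|n]]; simpl in Hn1; try discriminate. }
    subst w. apply abs_inv in H1. simpl in Hn.
    assert (Hok2 : okctx [TArr B O; TArr A O]) by (apply okctx_cons; [apply okU_1; auto|auto]).
    assert (Hc2 : cctx [TArr B O; TArr A O]) by (constructor; [simpl; auto using closed_O|auto]).
    destruct (classify _ w' _ Hok2 Hc2 H1 Hn) as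
      [[w'' Hw]|[[n [_ Hn1]]|[[n [c [P [Hw [Hn1 Hcc]]]]]|[n [c1 [c2 [P [Q [Hw [Hn1 [Hc1 Hc2']]]]]]]]]]].
    + subst. exfalso. eapply notlam_O; eauto.
    + destruct n as [|[|[|n]]]; simpl in Hn1; discriminate.
    + subst w'. simpl in Hn. destruct Hn as [_ Hnc].
      apply T_all_i. simpl. rewrite !orb_true_r; auto.
      simpl. apply T_arr_i. simpl; auto. apply T_arr_i. simpl; auto.
      destruct n as [|[|[|n]]]; simpl in Hn1; try discriminate; inversion Hn1; subst P.
      * eapply T_arr_e; [apply T_ax; reflexivity|]. eapply arg_F0; eauto.
      * eapply T_arr_e; [apply T_ax; reflexivity|]. eapply arg_F0; eauto.
    + destruct n as [|[|[|n]]]; simpl in Hn1; discriminate.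
Qed.

Lemma list_body : forall A, input_type A -> contains_O A = false ->
  forall w, normal w -> typing true [TArr A (TArr O O); O] w O ->
  typing false [TArr A (TArr (TVar 0) (TVar 0)); TVar 0] w (TVar 0).
Proof.
  intros A HA HOA. pose proof HA as [HcA [HpA _]].
  assert (Hok : okctx [TArr A (TArr O O); O]).
  { apply okctx_cons. apply okU_2; auto using closed_O, proper_O. apply okctx_cons; [apply okU_O|apply okctx_nil]. }
  assert (Hc : cctx [TArr A (TArr O O); O]).
  { constructor; [simpl; auto using closed_O|constructor; [apply closed_O|constructor]]. }
  induction w as [m|w IH|u IHu v IHv]; intros Hn H.
  - destruct (classify _ _ _ Hok Hc H Hn) as
      [[w' Hw]|[[n [Hw Hn1]]|[[n [c [P [Hw _]]]]|[n [c1 [c2 [P [Q [Hw _]]]]]]]]]; try discriminate.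
    inversion Hw; subst. destruct n as [|[|[|n]]]; simpl in Hn1; try discriminate.
    apply T_ax. reflexivity.
  - exfalso. eapply notlam_O; eauto.
  - destruct (classify _ _ _ Hok Hc H Hn) as
      [[w' Hw]|[[n [Hw Hn1]]|[[n [c [P [Hw [Hn1 _]]]]]|[n [c1 [c2 [P [Q [Hw [Hn1 [Hc1 Hc2]]]]]]]]]]]; try discriminate.
    + destruct n as [|[|[|n]]]; simpl in Hn1; discriminate.
    + destruct n as [|[|[|n]]]; simpl in Hn1; try discriminate.
      inversion Hn1; subst P Q. inversion Hw; subst u v.
      simpl in Hn. destruct Hn as [[_ Hn1'] Hn2].
      eapply T_arr_e; [eapply T_arr_e|].
      * apply T_ax. reflexivity.
      * eapply arg_F0; eauto.
      * apply IHv; auto.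
Qed.

Lemma input_tlist : forall A, input_type A -> contains_O A = false -> input_type (tlist A).
Proof.
  intros A HA HOA.
  pose proof HA as [HcA [HpA _]].
  unfold tlist. rewrite (lift_closed A) by auto.
  split; [|split].
  - unfold closed_ty. simpl. repeat split; try lia; apply (closed_mono _ 0); auto.
  - simpl. repeat split; auto.
  - intros t Hn Ht.
    assert (H1 : typF [] t (TArr O (TArr (TArr A (TArr O O)) O))).
    { assert (E : inst (TArr (TVar 0) (TArr (TArr A (TArr (TVar 0) (TVar 0))) (TVar 0))) O
                  = TArr O (TArr (TArr A (TArr O O)) O)).
      { unfold inst. simpl. rewrite !(subst_closed _ _ 0); auto. }
      rewrite <- E. apply T_all_e; auto. apply proper_O. }
    destruct (top_lam _ _ H1 Hn) as [w Hw]. subst t.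
    apply abs_inv in H1. simpl in Hn.
    assert (Hok : okctx [O]) by (apply okctx_cons; [apply okU_O|apply okctx_nil]).
    assert (Hc : cctx [O]) by (constructor; [apply closed_O|constructor]).
    destruct (classify _ w _ Hok Hc H1 Hn) as
      [[w' Hw]|[[n [_ Hn1]]|[[n [c [P [_ [Hn1 _]]]]]|[n [c1 [c2 [P [Q [Hw [Hn1 [Hc1 Hc2]]]]]]]]]]].
    2: { destruct n as [|[|n]]; simpl in Hn1; discriminate. }
    2: { destruct n as [|[|n]]; simpl in Hn1; discriminate. }
    2: { destruct n as [|[|n]]; simpl in Hn1; discriminate. }
    subst w. apply abs_inv in H1. simpl in Hn.
    apply T_all_i. simpl. auto.
    simpl. apply T_arr_i. simpl; auto. apply T_arr_i. simpl; auto.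
    apply list_body; auto.
Qed.

Theorem theorem2p2p9 : forall A B : ty,
  input_type A -> input_type B ->
  contains_O A = false -> contains_O B = false ->
  input_type (tand A B) /\ input_type (tor A B) /\ input_type (tlist A).
Proof.
  intros. split; [apply input_tand|split; [apply input_tor|apply input_tlist]]; auto.
Qed.
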